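(* Let $p$ be prime, $\mathbb{F}=\mathbb{F}_p$, and let $x,y,z\in\mathbb{F}^N$ satisfy $\sum_{t=1}^Nx(t)^iy(t)^az(t)^b=0$ for all $0\le a,b,i\le p-1$ (with the convention $0^0=1$). Then $$(S_{2p})_{y,z}(x)=\mathcal{H}\big(y^{(p)},z^{(p)}\big),$$ where $S_{2p}(x)=\sum_{T\subseteq[N],|T|=2p}\prod_{i\in T}x_i$.
   Context: Directional derivatives: $f_y(x)=f(x+y)-f(x)$, $f_{y,z}=(f_y)_z$. By definition $\mathcal{H}(y^{(p)},z^{(p)})=\sum_{1\le j_1<\dots<j_{2p}\le N}\ \sum_{\theta\subseteq[2p],|\theta|=p}\ \prod_{i\in\theta}y(j_i)\prod_{i\in[2p]\setminus\theta}z(j_i)$, where $y(j)$ is the $j$-th coordinate of $y$. *)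

(* Defs.v *)
From mathcomp Require Import all_boot all_order all_algebra.
Set Implicit Arguments. Unset Strict Implicit. Unset Printing Implicit Defensive.
Import GRing.Theory.
Local Open Scope ring_scope.

Definition S_sym (R : comRingType) (N k : nat) (x : 'I_N -> R) : R :=
  \sum_(T : {set 'I_N} | #|T| == k) \prod_(i in T) x i.

Definition dderiv (R : comRingType) (N : nat) (f : ('I_N -> R) -> R)
  (y : 'I_N -> R) : ('I_N -> R) -> R :=
  fun x => f (fun t => x t + y t) - f x.

(* H(y^(p), z^(p)) = sum_{j_1<...<j_{2p}} sum_{theta subset [2p], |theta|=p}
     prod_{i in theta} y(j_i) prod_{i notin theta} z(j_i),
   written with T = {j_1,...,j_{2p}} and A = {j_i | i in theta}. *)
Definition Hform (R : comRingType) (N p : nat) (y z : 'I_N -> R) : R :=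
  \sum_(T : {set 'I_N} | #|T| == (2 * p)%N)
    \sum_(A : {set 'I_N} | (A \subset T) && (#|A| == p))
      (\prod_(i in A) y i) * (\prod_(i in T :\: A) z i).

(* Main.v *)
Require Import Defs.
From mathcomp Require Import all_boot all_order all_algebra all_fingroup all_solvable all_field.
From mathcomp Require Import ring.
Import GRing.Theory.
Local Open Scope ring_scope.

Lemma iter_closed (T : Type) (g : T -> T) (P : T -> Prop) :
  (forall t, P t -> P (g t)) -> forall n t, P t -> P (iter n g t).
Proof. by move=> H; elim=> [|n IH] t Pt //=; apply: H; apply: IH. Qed.

Lemma Fp_natr_mod (p : nat) (hp : prime p) (a b : nat) :
  a = b %[mod p] -> (a%:R : 'F_p) = b%:R.
Proof. by move=> e; rewrite -(Fp_nat_mod hp a) e Fp_nat_mod. Qed.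

Lemma sum_const_mul (R : pzSemiRingType) (T : finType) (A : pred T) (v : R) :
  \sum_(i in A) v = v * #|A|%:R.
Proof. by rewrite sumr_const mulr_natr. Qed.

Lemma Wlem (p : nat) (hp : prime p) (T : finType) (g : T -> T) (ginj : injective g)
  (gp : forall t, iter p g t = t) (S : {set T}) (hS : forall t, t \in S -> g t \in S)
  (f : T -> 'F_p) (hf : forall t, f (g t) = f t) :
  \sum_(t in S) f t = \sum_(t in S | g t == t) f t.
Proof.
set s := perm ginj.
have sX n t : (s ^+ n)%g t = iter n g t.
  rewrite permX; elim: n => [|n IH] //=; by rewrite IH permE.
have pG : pgroup p <[s]>%g.
  rewrite /pgroup -orderE; apply: pnat_dvd (pnat_id hp).
  by rewrite order_dvdn; apply/eqP/permP => t; rewrite perm1 sX gp.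
have key v : #|[set t in S | f t == v]| = #|[set t in S | (f t == v) && (g t == t)]| %[mod p].
  set Sv := [set t in S | f t == v].
  have acts : [acts <[s]>, on Sv | 'P]%g.
    rewrite cycle_subG; apply/astabsP => t /=.
    rewrite /aperm permE !inE hf; case: (f t == v); rewrite ?andbF ?andbT //.
    apply/idP/idP; [move=> h | exact: hS].
    rewrite -(gp t) -(prednK (prime_gt0 hp)) iterSr.
    by apply: (@iter_closed _ g (fun t => t \in S) hS).
  rewrite (pgroup_fix_mod pG acts); congr (modn _ _); apply: eq_card => t.
  rewrite !inE -andbA; do 2 congr (_ && _).
  apply/subsetP/idP => [h | /eqP h a /cycleP [n ->]].
    by have := h s (cycle_id s); rewrite inE /= /aperm permE.
  rewrite inE /= /aperm sX; apply/eqP.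
  by elim: n => [|n IH] //=; rewrite IH h.
have E (P : pred T) : \sum_(t | P t) f t =
    \sum_(v : 'F_p) v * (#|[set t | P t && (f t == v)]|%:R).
  rewrite (partition_big f predT) //; apply: eq_bigr => v _.
  transitivity (\sum_(t in [set t | P t && (f t == v)]) v); last exact: sum_const_mul.
  apply: eq_big => t; first by rewrite inE.
  by case/andP=> _ /eqP.
rewrite (E (fun t => t \in S)) (E (fun t => (t \in S) && (g t == t))).
apply: eq_bigr => v _.
have h : #|[set t | (t \in S) && (f t == v)]| = #|[set t | (t \in S) && (g t == t) && (f t == v)]| %[mod p].
  rewrite key; congr modn; apply: eq_card => t; rewrite !inE.
  by case: (t \in S); case: (f t == v); case: (g t == t).
have e : (#|[set t | (t \in S) && (f t == v)]|%:R : 'F_p) = #|[set t | (t \in S) && (g t == t) && (f t == v)]|%:R.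
  exact: Fp_natr_mod.
by rewrite e.
Qed.

Lemma Fp_fermat (p : nat) (hp : prime p) (u : 'F_p) : u != 0 -> u ^+ (p.-1) = 1.
Proof.
move=> nz; have h : u ^+ p = u by have := expf_card u; rewrite card_Fp.
move: h; rewrite -[X in u ^+ X](prednK (prime_gt0 hp)) exprSr.
by rewrite -[X in _ = X](mul1r u) => /(mulIf nz).
Qed.

Lemma Fp_ind (p : nat) (hp : prime p) (u c : 'F_p) : 1 - (u - c) ^+ p.-1 = (u == c)%:R.
Proof.
have p1 : (0 < p.-1)%N by rewrite -subn1 subn_gt0 prime_gt1.
case: eqP => [->|/eqP ne]; first by rewrite subrr expr0n eqn0Ngt p1 subr0.
by rewrite Fp_fermat ?subrr // subr_eq0.
Qed.

Definition indp {p : nat} (c : 'F_p) : {poly 'F_p} := 1 - ('X - c%:P) ^+ p.-1.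

Lemma size_indp (p : nat) (hp : prime p) (c : 'F_p) : (size (indp c) <= p)%N.
Proof.
rewrite /indp; apply: leq_trans (size_polyD _ _) _.
rewrite size_polyN size_exp_XsubC prednK ?prime_gt0 // geq_max leqnn andbT.
by rewrite size_poly1 prime_gt0.
Qed.

Lemma horner_indp (p : nat) (c u : 'F_p) : (indp c).[u] = 1 - (u - c) ^+ p.-1.
Proof. by rewrite /indp !hornerE. Qed.

Lemma moments0 (p N : nat) (hp : prime p) (x y z : 'I_N -> 'F_p)
  (horth : forall i a b : nat, (i <= p - 1)%N -> (a <= p - 1)%N -> (b <= p - 1)%N ->
     \sum_(t < N) x t ^+ i * y t ^+ a * z t ^+ b = 0)
  (q1 q2 q3 : {poly 'F_p}) :
  (size q1 <= p)%N -> (size q2 <= p)%N -> (size q3 <= p)%N ->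
  \sum_(t < N) q1.[x t] * q2.[y t] * q3.[z t] = 0.
Proof.
move=> s1 s2 s3.
have -> : \sum_(t < N) q1.[x t] * q2.[y t] * q3.[z t] =
  \sum_(i < p) \sum_(j < p) \sum_(k < p)
     (q1`_i * q2`_j * q3`_k) * \sum_(t < N) x t ^+ i * y t ^+ j * z t ^+ k.
  have Ht t : q1.[x t] * q2.[y t] * q3.[z t] = \sum_(i < p) \sum_(j < p) \sum_(k < p)
     (q1`_i * q2`_j * q3`_k) * (x t ^+ i * y t ^+ j * z t ^+ k).
    rewrite (horner_coef_wide _ s1) (horner_coef_wide _ s2) (horner_coef_wide _ s3).
    rewrite big_distrlr big_distrl; apply: eq_bigr => i _ /=.
    rewrite big_distrl; apply: eq_bigr => j _ /=.
    rewrite big_distrr; apply: eq_bigr => k _ /=; ring.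
  rewrite (eq_bigr _ (fun t _ => Ht t)).
  rewrite exchange_big; apply: eq_bigr => i _.
  rewrite exchange_big; apply: eq_bigr => j _.
  rewrite exchange_big; apply: eq_bigr => k _.
  by rewrite mulr_sumr.
apply: big1 => i _; apply: big1 => j _; apply: big1 => k _.
have lt (m : 'I_p) : (m <= p - 1)%N by rewrite subn1 -ltnS prednK ?prime_gt0.
by rewrite horth ?lt // mulr0.
Qed.

Lemma class_dvd (p N : nat) (hp : prime p) (x y z : 'I_N -> 'F_p)
  (horth : forall i a b : nat, (i <= p - 1)%N -> (a <= p - 1)%N -> (b <= p - 1)%N ->
     \sum_(t < N) x t ^+ i * y t ^+ a * z t ^+ b = 0) (a b c : 'F_p) :
  (p %| #|[set t : 'I_N | (x t == a) && (y t == b) && (z t == c)]|)%N.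
Proof.
rewrite (dvdn_pcharf (pchar_Fp hp)).
have := @moments0 p N hp x y z horth _ _ _ (size_indp _ hp a) (size_indp _ hp b) (size_indp _ hp c).
under eq_bigr => t _ do rewrite !horner_indp !(Fp_ind _ hp) -!natrM !mulnb.
rewrite -natr_sum => h; apply/eqP; rewrite -[RHS]h; congr (_%:R).
rewrite -sum1_card big_mkcond /=; apply: eq_bigr => t _.
by rewrite inE; case: (_ && _).
Qed.

Local Open Scope nat_scope.

Definition rot (p k : nat) := (k %/ p * p + k.+1 %% p)%N.

Lemma iter_rot (p : nat) (p0 : (0 < p)%N) n k : iter n (rot p) k = (k %/ p * p + (k + n) %% p)%N.
Proof.
elim: n => [|n IH] /=; first by rewrite addn0 -divn_eq.
rewrite IH /rot; set q := (k %/ p)%N; set r := ((k + n) %% p)%N.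
have rp : (r < p)%N by rewrite ltn_pmod.
rewrite divnMDl // (divn_small rp) addn0 -addnS modnMDl /r -addn1 modnDml addn1 addnS.
by [].
Qed.

Lemma rot_lt (p : nat) (p0 : (0 < p)%N) k m : (p %| m)%N -> (k < m)%N -> (rot p k < m)%N.
Proof.
case/dvdnP=> m' -> km.
have q : (k %/ p < m')%N by rewrite ltn_divLR.
apply: (@leq_trans ((k %/ p).+1 * p)); last by rewrite leq_mul2r q orbT.
by rewrite /rot mulSn addnC ltn_add2r ltn_pmod.
Qed.

Lemma rot_neq (p : nat) (p1 : (1 < p)%N) k : rot p k != k.
Proof.
apply/eqP; rewrite /rot => h.
have /eqP : (k %/ p * p + k.+1 %% p = k %/ p * p + k %% p)%N by rewrite -divn_eq.
rewrite eqn_add2l => e.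
have : (k.+1 == k %[mod p]) by [].
rewrite eqn_mod_dvd // subSnn dvdn1 => /eqP ep; by rewrite ep in p1.
Qed.

Lemma exists_sig (p : nat) (p1 : (1 < p)%N) (T : finType) (K : eqType) (key : T -> K)
  (hdiv : forall t, (p %| #|[set s | key s == key t]|)%N) :
  exists sig : T -> T, [/\ forall t, iter p sig t = t, forall t, sig t != t
     & forall t, key (sig t) = key t].
Proof.
have p0 : (0 < p)%N by apply: ltnW.
pose e t := enum [set s | key s == key t].
pose sig t := nth t (e t) (rot p (index t (e t))).
have te t : t \in e t by rewrite mem_enum inE.
have sz t : (p %| size (e t))%N by rewrite -cardE.
have sige t : sig t \in e t by rewrite mem_nth // rot_lt // index_mem.
have keysig t : key (sig t) = key t by move: (sige t); rewrite mem_enum inE => /eqP.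
have esig t : e (sig t) = e t by rewrite /e keysig.
have isig t : index (sig t) (e t) = rot p (index t (e t)).
  by rewrite index_uniq ?enum_uniq // rot_lt // index_mem.
have it n t : (iter n sig t \in e t) && (index (iter n sig t) (e t) == iter n (rot p) (index t (e t))).
  elim: n => [|n IH] /=; first by rewrite te eqxx.
  case/andP: IH => m /eqP i.
  have ee : e (iter n sig t) = e t.
    by rewrite /e; move: m; rewrite mem_enum inE => /eqP ->.
  by rewrite -ee sige /= isig ee i.
exists sig; split=> // [t|t].
  case/andP: (it p t) => m /eqP; rewrite iter_rot // modnDr -divn_eq => i.
  by rewrite -(nth_index t m) i nth_index.
apply/eqP => h; have := isig t; rewrite h => /esym/eqP; apply/negP.
exact: rot_neq.
Qed.

Local Open Scope ring_scope.
Set Implicit Arguments. Unset Strict Implicit.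

Lemma porbit_iter (T : finType) (s : {perm T}) i k :
  reflect (exists n, k = iter n s i) (k \in porbit s i).
Proof.
apply: (iffP (porbitP _ _ _)) => -[n ->]; exists n; by rewrite permX.
Qed.

Lemma card_porbit_p (p : nat) (hp : prime p) (T : finType) (s : {perm T})
  (hs : (s ^+ p)%g = 1%g) (hnf : forall t, s t != t) i : #|porbit s i| = p.
Proof.
have d : (#|porbit s i| %| p)%N.
  have -> : porbit s i = orbit 'P <[s]>%g i by rewrite porbit.unlock.
  rewrite card_orbit; apply: dvdn_trans (dvdn_indexg _ _) _.
  by rewrite -orderE order_dvdn hs.
have ne1 : #|porbit s i| != 1%N.
  apply/negP => /cards1P [u hu].
  have h1 := porbit_id s i; have h2 : s i \in porbit s i.
    by apply/porbit_iter; exists 1%N.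
  by move: h1 h2; rewrite hu !inE => /eqP -> /eqP; apply/eqP; rewrite hnf.
exact/(prime_nt_dvdP hp ne1).
Qed.

Lemma porbit_stable (T : finType) (s : {perm T}) i : [set s k | k in porbit s i] = porbit s i.
Proof.
apply/eqP; rewrite eqEcard card_imset ?leqnn ?andbT; last exact: perm_inj.
apply/subsetP => k /imsetP [u /porbit_iter [n ->] ->].
by apply/porbit_iter; exists n.+1.
Qed.

Lemma stable_sub (T : finType) (s : {perm T}) (A : {set T}) i :
  [set s k | k in A] = A -> i \in A -> porbit s i \subset A.
Proof.
move=> sA iA; apply/subsetP => k /porbit_iter [n ->].
elim: n => [|n IH] //=; rewrite -sA; exact: imset_f.
Qed.

Lemma stable_p (p : nat) (hp : prime p) (T : finType) (s : {perm T})
  (hs : (s ^+ p)%g = 1%g) (hnf : forall t, s t != t) (A : {set T}) i :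
  [set s k | k in A] = A -> #|A| = p -> i \in A -> A = porbit s i.
Proof.
move=> sA cA iA; apply/esym/eqP.
by rewrite eqEcard (stable_sub sA iA) /= (card_porbit_p hp hs hnf) cA.
Qed.

Lemma imsetD_perm (T : finType) (s : {perm T}) (A B : {set T}) :
  [set s k | k in A :\: B] = [set s k | k in A] :\: [set s k | k in B].
Proof.
apply/setP => k; rewrite -(permKV s k) !inE !(mem_imset _ _ (@perm_inj _ s)).
by rewrite !inE.
Qed.

Lemma stable_2p (p : nat) (hp : prime p) (T : finType) (s : {perm T})
  (hs : (s ^+ p)%g = 1%g) (hnf : forall t, s t != t) (A : {set T}) :
  [set s k | k in A] = A -> #|A| = (2 * p)%N ->
  exists i j, [/\ A = porbit s i :|: porbit s j, [disjoint porbit s i & porbit s j]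
     & porbit s i != porbit s j].
Proof.
move=> sA cA.
have cp := card_porbit_p hp hs hnf.
have /set0Pn [i iA] : A != set0.
  by rewrite -card_gt0 cA muln_gt0 (prime_gt0 hp).
have sub := stable_sub sA iA.
set B := A :\: porbit s i.
have sB : [set s k | k in B] = B by rewrite imsetD_perm sA porbit_stable.
have cB : #|B| = p.
  by rewrite cardsD (setIidPr sub) cA cp mul2n -addnn addnK.
have /set0Pn [j jB] : B != set0 by rewrite -card_gt0 cB (prime_gt0 hp).
have eB := stable_p hp hs hnf sB cB jB.
exists i, j; split.
- by rewrite -eB /B -[LHS](setID A (porbit s i)) (setIidPr sub).
- rewrite -eB disjoint_sym disjoints_subset; apply/subsetP => k.
  by rewrite /B !inE => /andP[].
- apply/negP => /eqP e; have jO : j \in porbit s i by rewrite e porbit_id.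
  by move: jB; rewrite /B inE jO.
Qed.

Lemma const_porbit (T : finType) (R : Type) (s : {perm T}) (v : T -> R)
  (hv : forall t, v (s t) = v t) i k : k \in porbit s i -> v k = v i.
Proof. by case/porbit_iter => n ->; elim: n => [|n IH] //=; rewrite hv. Qed.

Lemma Fp_frob (p : nat) (hp : prime p) (u : 'F_p) : u ^+ p = u.
Proof. by have := expf_card u; rewrite card_Fp. Qed.

Lemma prod_porbit (p : nat) (hp : prime p) (T : finType) (s : {perm T})
  (hs : (s ^+ p)%g = 1%g) (hnf : forall t, s t != t) (v : T -> 'F_p)
  (hv : forall t, v (s t) = v t) i : \prod_(k in porbit s i) v k = v i.
Proof.
rewrite (eq_bigr (fun _ => v i)); last by move=> k; apply: const_porbit.
by rewrite prodr_const (card_porbit_p hp hs hnf) Fp_frob.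
Qed.

Lemma prod_imset (T : finType) (R : comPzRingType) (s : {perm T}) (v : T -> R)
  (hv : forall t, v (s t) = v t) (A : {set T}) :
  \prod_(k in [set s k | k in A]) v k = \prod_(k in A) v k.
Proof.
rewrite big_imset /=; first by apply: eq_bigr => k _; rewrite hv.
by move=> a b _ _; apply: perm_inj.
Qed.

Lemma stable_pick (p : nat) (hp : prime p) (T : finType) (s : {perm T})
  (hs : (s ^+ p)%g = 1%g) (hnf : forall t, s t != t) (i j : T) (A : {set T}) :
  [set s k | k in A] = A -> #|A| = p -> A \subset porbit s i :|: porbit s j ->
  (A == porbit s i) || (A == porbit s j).
Proof.
move=> sA cA sub.
have /set0Pn [k kA] : A != set0 by rewrite -card_gt0 cA (prime_gt0 hp).
rewrite (stable_p hp hs hnf sA cA kA) !eq_porbit_mem.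
by move/subsetP: sub => /(_ k kA); rewrite inE.
Qed.

Unset Implicit Arguments. Set Strict Implicit.

Lemma WlemP (p : nat) (hp : prime p) (T : finType) (g : T -> T) (ginj : injective g)
  (gp : forall t, iter p g t = t) (P : pred T) (hP : forall t, P t -> P (g t))
  (f : T -> 'F_p) (hf : forall t, f (g t) = f t) :
  \sum_(t | P t) f t = \sum_(t | P t && (g t == t)) f t.
Proof.
have hS : forall t, t \in [set t | P t] -> g t \in [set t | P t].
  by move=> t; rewrite !inE; apply: hP.
have H := @Wlem p hp T g ginj gp _ hS f hf.
transitivity (\sum_(t in [set t | P t]) f t); first by apply: eq_bigl => t; rewrite inE.
by rewrite H; apply: eq_bigl => t; rewrite inE.
Qed.

Lemma prod_setU (R : comPzRingType) (T : finType) (v : T -> R) (A B : {set T}) :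
  [disjoint A & B] -> \prod_(k in A :|: B) v k = (\prod_(k in A) v k) * (\prod_(k in B) v k).
Proof. by move=> d; rewrite -bigU //; apply: eq_bigl => k; rewrite !inE. Qed.

Theorem lemma3p1 (p N : nat) (hp : prime p) (x y z : 'I_N -> 'F_p)
  (horth : forall i a b : nat, (i <= p - 1)%N -> (a <= p - 1)%N -> (b <= p - 1)%N ->
     \sum_(t < N) x t ^+ i * y t ^+ a * z t ^+ b = 0) :
  dderiv (dderiv (S_sym (2 * p) (N:=N)) y) z x = Hform p y z.
Proof.
have p1 := prime_gt1 hp.
have hdiv t : (p %| #|[set u | (x u, y u, z u) == (x t, y t, z t)]|)%N.
  have := @class_dvd p N hp x y z horth (x t) (y t) (z t).
  by rewrite (eq_card (B := [set u | (x u, y u, z u) == (x t, y t, z t)])) // => u;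
    rewrite !inE !xpair_eqE.
have [sig [sp snf skey]] := @exists_sig p p1 'I_N _ (fun t => (x t, y t, z t)) hdiv.
have sinj : injective sig.
  by move=> a b e; rewrite -(sp a) -(sp b) -(prednK (prime_gt0 hp)) !iterSr e.
set s := perm sinj.
have sE t : s t = sig t by rewrite permE.
have itE n t : iter n s t = iter n sig t by elim: n => //= n IH; rewrite IH sE.
have hs : (s ^+ p)%g = 1%g by apply/permP => t; rewrite permX perm1 itE sp.
have hnf t : s t != t by rewrite sE.
have hx t : x (s t) = x t by move: (skey t); rewrite sE => -[].
have hy t : y (s t) = y t by move: (skey t); rewrite sE => -[].
have hz t : z (s t) = z t by move: (skey t); rewrite sE => -[].
pose g (A : {set 'I_N}) := [set s k | k in A].
have ginj : injective g by apply: imset_inj; apply: perm_inj.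
have gp A : iter p g A = A.
  suff H n : iter n g A = [set iter n s k | k in A].
    rewrite H -[RHS]imset_id; apply: eq_imset => k; by rewrite -permX hs perm1.
  elim: n => [|n IH] /=; first by rewrite imset_id.
  by rewrite IH /g -imset_comp.
have gcard A : #|g A| = #|A| by rewrite card_imset //; apply: perm_inj.
have hvs (v : 'I_N -> 'F_p) : (forall t, v (s t) = v t) ->
    forall A, \prod_(k in g A) v k = \prod_(k in A) v k.
  by move=> hv A; apply: prod_imset.
rewrite /dderiv /S_sym -!sumrB.
rewrite (@WlemP p hp _ g ginj gp (fun T => #|T| == (2 * p)%N)); first last.
- by move=> T /=; rewrite !hvs // => t; rewrite ?hx ?hy ?hz.
- by move=> T /=; rewrite gcard.
pose g2 (q : {set 'I_N} * {set 'I_N}) := (g q.1, g q.2).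
have g2inj : injective g2 by move=> [a b] [c d] [/ginj -> /ginj ->].
have g2p q : iter p g2 q = q.
  suff H n : iter n g2 q = (iter n g q.1, iter n g q.2) by rewrite H !gp -surjective_pairing.
  by elim: n => [|n IH] /=; [case: q | rewrite IH].
rewrite /Hform pair_big_dep.
rewrite (@WlemP p hp _ g2 g2inj g2p
   (fun q => (#|q.1| == (2 * p)%N) && ((q.2 \subset q.1) && (#|q.2| == p)))); first last.
- move=> [T A] /=; rewrite /g -imsetD_perm.
  by rewrite !hvs // => t; rewrite ?hy ?hz.
- move=> [T A] /= /andP[c1 /andP[sub c2]].
  by rewrite !gcard c1 c2 imsetS.
transitivity (\sum_(T : {set 'I_N} | (#|T| == (2 * p)%N) && (g T == T))
   \sum_(A : {set 'I_N} | (A \subset T) && (#|A| == p) && (g A == A))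
      (\prod_(i in A) y i) * (\prod_(i in T :\: A) z i)); last first.
  rewrite pair_big_dep; apply: eq_bigl => -[T A] /=; rewrite /g2 /= xpair_eqE.
  by case: (#|T| == _); case: (A \subset T); case: (#|A| == p); case: (g T == T);
    case: (g A == A).
apply: eq_bigr => T /andP[/eqP cT /eqP gT].
have [i [j [eT dis neq]]] := stable_2p hp hs hnf gT cT.
rewrite (eq_bigl (fun A => A \in [set porbit s i; porbit s j])); last first.
  move=> A; rewrite !inE; apply/idP/idP.
  - case/andP => /andP[sub /eqP cA] /eqP gA; rewrite eT in sub.
    exact: (stable_pick hp hs hnf gA cA sub).
  - case/orP => /eqP ->; rewrite /g porbit_stable (card_porbit_p hp hs hnf) !eqxx eT.
      by rewrite subsetUl.
    by rewrite subsetUr.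
rewrite big_setU1 ?big_set1 /=; last by rewrite inE.
have d1 : T :\: porbit s i = porbit s j.
  by rewrite eT setDUl setDv set0U; apply/setDidPl; rewrite disjoint_sym.
have d2 : T :\: porbit s j = porbit s i.
  by rewrite eT setDUl setDv setU0; apply/setDidPl.
rewrite d1 d2 eT !prod_setU //.
rewrite !(prod_porbit hp hs hnf); try by move=> t; rewrite ?hx ?hy ?hz.
ring.
Qed.
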